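(* Let $a<b$ and $c<d$ be real numbers, and let $f,g:[a,b]\times[c,d]\to\mathbb{R}$ be continuous functions whose first partial derivatives $D_1 f, D_2 f, D_1 g, D_2 g$ and mixed second partial derivatives $D_2D_1 f$, $D_2 D_1 g$ exist and are continuous on $[a,b]\times[c,d]$. For $h\in\{f,g\}$ and $(x,y)\in[a,b]\times[c,d]$ define \[ P(h(x,y))=\frac12\big[h(x,c)+h(x,d)+h(a,y)+h(b,y)\big]-\frac14\big[h(a,c)+h(a,d)+h(b,c)+h(b,d)\big]. \] Then \[ \left|\int_a^b\int_c^d\Big[f(x,y)g(x,y)-\frac12\big(P(f(x,y))\,g(x,y)+P(g(x,y))\,f(x,y)\big)\Big]\,dy\,dx\right| \le \frac18(b-a)(d-c)\int_a^b\int_c^d\Big[|g(x,y)|\,\|D_2D_1 f\|_\infty+|f(x,y)|\,\|D_2D_1 g\|_\infty\Big]\,dy\,dx . \]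
   Context: $D_1$ and $D_2$ denote partial differentiation with respect to the first and second variable respectively, so $D_2D_1 f=\frac{\partial}{\partial y}\frac{\partial f}{\partial x}$. For a function $h$ on $[a,b]\times[c,d]$, $\|h\|_\infty=\sup_{(x,y)\in[a,b]\times[c,d]}|h(x,y)|$. *)

(* Defs.v *)
From Stdlib Require Import Reals.
From Coquelicot Require Import Coquelicot.
Open Scope R_scope.

Definition rect (a b c d : R) (p : R * R) : Prop :=
  a <= fst p <= b /\ c <= snd p <= d.

Definition cont_on_rect (a b c d : R) (h : R -> R -> R) : Prop :=
  forall x y, a <= x <= b -> c <= y <= d ->
    filterlim (fun p : R * R => h (fst p) (snd p))
      (within (rect a b c d) (locally (x, y))) (locally (h x y)).

(* Derivative of u : R -> R at x relative to the interval [lo,hi]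
   (one-sided at the endpoints). *)
Definition is_derive_in (lo hi : R) (u : R -> R) (x l : R) : Prop :=
  filterlim (fun t => (u t - u x) / (t - x))
    (within (fun t => lo <= t <= hi /\ t <> x) (locally x)) (locally l).

Definition is_D1 (a b c d : R) (h h1 : R -> R -> R) : Prop :=
  forall x y, a <= x <= b -> c <= y <= d ->
    is_derive_in a b (fun t => h t y) x (h1 x y).

Definition is_D2 (a b c d : R) (h h2 : R -> R -> R) : Prop :=
  forall x y, a <= x <= b -> c <= y <= d ->
    is_derive_in c d (fun t => h x t) y (h2 x y).

Definition sup_norm (a b c d : R) (h : R -> R -> R) : R :=
  real (Lub_Rbar (fun z => exists x y, a <= x <= b /\ c <= y <= d /\
                                       z = Rabs (h x y))).

Definition Pop (a b c d : R) (h : R -> R -> R) (x y : R) : R :=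
  / 2 * (h x c + h x d + h a y + h b y)
  - / 4 * (h a c + h a d + h b c + h b d).

Definition iint (a b c d : R) (k : R -> R -> R) : R :=
  RInt (fun x => RInt (fun y => k x y) c d) a b.

(* Main.v *)
Require Import Defs.
From Stdlib Require Import Reals Lra Lia.
From Coquelicot Require Import Coquelicot.
Open Scope R_scope.

Definition cl (lo hi x : R) := Rmax lo (Rmin hi x).

Lemma cl_in lo hi x : lo <= hi -> lo <= cl lo hi x <= hi.
Proof. intros. unfold cl, Rmax, Rmin. repeat destruct Rle_dec; lra. Qed.

Lemma cl_id lo hi x : lo <= x <= hi -> cl lo hi x = x.
Proof. intros. unfold cl, Rmax, Rmin. repeat destruct Rle_dec; lra. Qed.

Lemma cl_lip lo hi x y : lo <= hi -> Rabs (cl lo hi x - cl lo hi y) <= Rabs (x - y).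
Proof. intros. unfold cl, Rmax, Rmin, Rabs.
  repeat destruct Rle_dec; repeat destruct Rcase_abs; lra. Qed.

Lemma rect_eps a b c d h x y : cont_on_rect a b c d h -> a <= x <= b -> c <= y <= d ->
  forall eps, 0 < eps -> exists del, 0 < del /\ forall x' y', a <= x' <= b -> c <= y' <= d ->
   Rabs (x' - x) < del -> Rabs (y' - y) < del -> Rabs (h x' y' - h x y) < eps.
Proof.
  intros H Hx Hy eps He.
  specialize (H x y Hx Hy (fun z => Rabs (z - h x y) < eps)).
  destruct H as [del Hd].
  - exists (mkposreal eps He). intros z Hz. exact Hz.
  - exists del. split. apply cond_pos. intros x' y' Hx' Hy' H1 H2.
    apply (Hd (x', y')). split; assumption. split; assumption.
Qed.


Definition deps A B (u : R -> R) x l := forall eps, 0 < eps -> exists del, 0 < del /\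
  forall t, Rabs (t - x) < del -> A <= t <= B -> t <> x ->
    Rabs ((u t - u x) / (t - x) - l) < eps.

Lemma derive_in_eps A B u x l : is_derive_in A B u x l -> deps A B u x l.
Proof.
  intros H eps He.
  specialize (H (fun z => Rabs (z - l) < eps)).
  destruct H as [del Hd].
  - exists (mkposreal eps He). intros z Hz. exact Hz.
  - exists del. split. apply cond_pos. intros t H1 H2 H3.
    apply Hd. exact H1. split; assumption.
Qed.

Lemma deps_minus A B u v x l m : deps A B u x l -> deps A B v x m ->
  deps A B (fun t => u t - v t) x (l - m).
Proof.
  intros Hu Hv eps He.
  destruct (Hu (eps/2)) as [d1 [Hd1 H1]]; [lra|].
  destruct (Hv (eps/2)) as [d2 [Hd2 H2]]; [lra|].
  exists (Rmin d1 d2). split. apply Rmin_pos; lra.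
  intros t Ht Ht2 Ht3.
  assert (Hm1 := Rmin_l d1 d2). assert (Hm2 := Rmin_r d1 d2).
  specialize (H1 t ltac:(lra) Ht2 Ht3). specialize (H2 t ltac:(lra) Ht2 Ht3).
  replace ((u t - v t - (u x - v x)) / (t - x) - (l - m)) with
    (((u t - u x) / (t - x) - l) - ((v t - v x) / (t - x) - m)).
  2:{ field. lra. }
  eapply Rle_lt_trans. apply Rabs_triang. rewrite Rabs_Ropp. lra.
Qed.

Lemma mvt_b A B lo hi (u u' : R -> R) K :
  A <= lo -> lo <= hi -> hi <= B ->
  (forall t, lo < t < hi -> deps A B u t (u' t)) ->
  (forall t, lo <= t <= hi -> forall eps, 0 < eps -> exists del, 0 < del /\
      forall s, A <= s <= B -> Rabs (s - t) < del -> Rabs (u s - u t) < eps) ->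
  (forall t, lo <= t <= hi -> Rabs (u' t) <= K) ->
  Rabs (u hi - u lo) <= K * (hi - lo).
Proof.
  intros HA Hlh HB Hd Hc Hb.
  set (v := fun t => u (cl lo hi t)).
  assert (Hv : forall t, lo <= t <= hi -> v t = u t).
  { intros. unfold v. rewrite cl_id; auto. }
  destruct (MVT_gen v lo hi u') as [c0 [Hc0 Heq]].
  - intros t Ht. rewrite Rmin_left in Ht by lra. rewrite Rmax_right in Ht by lra.
    apply is_derive_Reals. intros eps He.
    destruct (Hd t Ht eps He) as [del [Hdel H]].
    assert (Hp : 0 < Rmin del (Rmin (t - lo) (hi - t))).
    { apply Rmin_pos. lra. apply Rmin_pos; lra. }
    exists (mkposreal _ Hp). intros h Hh0 Hh. simpl in Hh.
    assert (Hm1 := Rmin_l del (Rmin (t - lo) (hi - t))).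
    assert (Hm2 := Rmin_r del (Rmin (t - lo) (hi - t))).
    assert (Hm3 := Rmin_l (t - lo) (hi - t)).
    assert (Hm4 := Rmin_r (t - lo) (hi - t)).
    assert (Hh' := Rabs_le_between h (Rabs h)). destruct Hh' as [Hh' _].
    specialize (Hh' (Rle_refl _)).
    rewrite !Hv by lra.
    specialize (H (t + h)).
    replace (t + h - t) with h in H by ring.
    apply H; try lra.
  - intros t Ht. rewrite Rmin_left in Ht by lra. rewrite Rmax_right in Ht by lra.
    intros eps He. destruct (Hc t Ht eps He) as [del [Hdel H]].
    exists del. split. exact Hdel. intros s [_ Hs]. simpl in Hs. unfold R_dist in Hs.
    simpl. unfold R_dist. unfold v. rewrite (cl_id lo hi t) by lra.
    apply H. pose proof (cl_in lo hi s Hlh). lra.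
    replace (cl lo hi s - t) with (cl lo hi s - cl lo hi t) by (rewrite (cl_id lo hi t) by lra; ring).
    eapply Rle_lt_trans. apply cl_lip. lra. exact Hs.
  - rewrite Rmin_left in Hc0 by lra. rewrite Rmax_right in Hc0 by lra.
    rewrite <- (Hv hi), <- (Hv lo) by lra. rewrite Heq.
    rewrite Rabs_mult. rewrite (Rabs_right (hi - lo)) by lra.
    apply Rmult_le_compat_r. lra. apply Hb; auto.
Qed.


Lemma mvt_sym A B (u u' : R -> R) K :
  (forall t, A <= t <= B -> deps A B u t (u' t)) ->
  (forall t, A <= t <= B -> forall eps, 0 < eps -> exists del, 0 < del /\
      forall s, A <= s <= B -> Rabs (s - t) < del -> Rabs (u s - u t) < eps) ->
  (forall t, A <= t <= B -> Rabs (u' t) <= K) ->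
  forall p q, A <= p <= B -> A <= q <= B -> Rabs (u p - u q) <= K * Rabs (p - q).
Proof.
  intros Hd Hc Hb p q Hp Hq.
  destruct (Rle_dec q p).
  - rewrite (Rabs_right (p - q)) by lra.
    apply (mvt_b A B q p u u' K); try lra.
    + intros; apply Hd; lra.
    + intros; apply Hc; lra.
    + intros; apply Hb; lra.
  - rewrite (Rabs_left1 (p - q)) by lra. rewrite <- Rabs_Ropp.
    replace (- (u p - u q)) with (u q - u p) by ring.
    replace (- (p - q)) with (q - p) by ring.
    apply (mvt_b A B p q u u' K); try lra.
    + intros; apply Hd; lra.
    + intros; apply Hc; lra.
    + intros; apply Hb; lra.
Qed.

Lemma rbound a b c d h h1 h12 M :
  cont_on_rect a b c d h -> cont_on_rect a b c d h1 ->
  is_D1 a b c d h h1 -> is_D2 a b c d h1 h12 ->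
  (forall x y, a <= x <= b -> c <= y <= d -> Rabs (h12 x y) <= M) ->
  forall x al y ga, a <= x <= b -> a <= al <= b -> c <= y <= d -> c <= ga <= d ->
  Rabs (h x y - h al y - h x ga + h al ga) <= M * Rabs (y - ga) * Rabs (x - al).
Proof.
  intros Ch Ch1 D1 D2 HM x al y ga Hx Hal Hy Hga.
  replace (h x y - h al y - h x ga + h al ga) with
    ((h x y - h x ga) - (h al y - h al ga)) by ring.
  refine (mvt_sym a b (fun t => h t y - h t ga) (fun t => h1 t y - h1 t ga) _ _ _ _ x al _ _).
  - intros t Ht. apply deps_minus; apply derive_in_eps; apply D1; auto.
  - intros t Ht eps He.
    destruct (rect_eps a b c d h t y Ch Ht Hy (eps/2)) as [d1 [Hd1 H1]]; [lra|].
    destruct (rect_eps a b c d h t ga Ch Ht Hga (eps/2)) as [d2 [Hd2 H2]]; [lra|].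
    exists (Rmin d1 d2). split. apply Rmin_pos; lra.
    intros s Hs Hst.
    assert (Hm1 := Rmin_l d1 d2). assert (Hm2 := Rmin_r d1 d2).
    assert (E0 : Rabs (y - y) < d1) by (rewrite Rminus_diag, Rabs_R0; lra).
    assert (E1 : Rabs (ga - ga) < d2) by (rewrite Rminus_diag, Rabs_R0; lra).
    specialize (H1 s y Hs Hy ltac:(lra) E0).
    specialize (H2 s ga Hs Hga ltac:(lra) E1).
    replace (h s y - h s ga - (h t y - h t ga)) with
      ((h s y - h t y) - (h s ga - h t ga)) by ring.
    eapply Rle_lt_trans. apply Rabs_triang. rewrite Rabs_Ropp. lra.
  - intros t Ht.
    apply (mvt_sym c d (fun s => h1 t s) (fun s => h12 t s)); auto.
    + intros s Hs. apply derive_in_eps. apply D2; auto.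
    + intros s Hs eps He.
      destruct (rect_eps a b c d h1 t s Ch1 Ht Hs eps He) as [d1 [Hd1 H1]].
      exists d1. split. exact Hd1. intros s' Hs' Hss.
      apply H1; auto. rewrite Rminus_diag, Rabs_R0; lra.
  - exact Hx.
  - exact Hal.
Qed.

Lemma pbound a b c d h h1 h12 M :
  a <= b -> c <= d ->
  cont_on_rect a b c d h -> cont_on_rect a b c d h1 ->
  is_D1 a b c d h h1 -> is_D2 a b c d h1 h12 ->
  (forall x y, a <= x <= b -> c <= y <= d -> Rabs (h12 x y) <= M) ->
  forall x y, a <= x <= b -> c <= y <= d ->
  Rabs (h x y - Pop a b c d h x y) <= / 4 * ((b - a) * (d - c) * M).
Proof.
  intros Hab Hcd Ch Ch1 D1 D2 HM x y Hx Hy.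
  assert (Ha : a <= a <= b) by lra. assert (Hb : a <= b <= b) by lra.
  assert (Hc : c <= c <= d) by lra. assert (Hd : c <= d <= d) by lra.
  pose proof (rbound a b c d h h1 h12 M Ch Ch1 D1 D2 HM x a y c Hx Ha Hy Hc) as R1.
  pose proof (rbound a b c d h h1 h12 M Ch Ch1 D1 D2 HM x a y d Hx Ha Hy Hd) as R2.
  pose proof (rbound a b c d h h1 h12 M Ch Ch1 D1 D2 HM x b y c Hx Hb Hy Hc) as R3.
  pose proof (rbound a b c d h h1 h12 M Ch Ch1 D1 D2 HM x b y d Hx Hb Hy Hd) as R4.
  rewrite (Rabs_right (y - c)), (Rabs_right (x - a)) in * by lra.
  rewrite (Rabs_left1 (y - d)), (Rabs_left1 (x - b)) in * by lra.
  apply Rabs_le_between in R1, R2, R3, R4.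
  apply Rabs_le_between. unfold Pop.
  assert (E : M * (y - c) * (x - a) + M * - (y - d) * (x - a) + M * (y - c) * - (x - b)
     + M * - (y - d) * - (x - b) = (b - a) * (d - c) * M) by ring.
  lra.
Qed.


Lemma clamp_cont a b c d h : a <= b -> c <= d -> cont_on_rect a b c d h ->
  forall x y, continuity_2d_pt (fun u v => h (cl a b u) (cl c d v)) x y.
Proof.
  intros Hab Hcd Ch x y eps.
  destruct (rect_eps a b c d h (cl a b x) (cl c d y) Ch (cl_in a b x Hab) (cl_in c d y Hcd) eps (cond_pos eps)) as [del [Hd H]].
  exists (mkposreal del Hd). simpl. intros u v Hu Hv.
  apply H. apply cl_in; auto. apply cl_in; auto.
  eapply Rle_lt_trans. apply cl_lip; auto. auto.
  eapply Rle_lt_trans. apply cl_lip; auto. auto.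
Qed.

Lemma bounded2d a b c d (H : R -> R -> R) : a <= b -> c <= d ->
  (forall x y, continuity_2d_pt H x y) ->
  exists M, forall x y, a <= x <= b -> c <= y <= d -> Rabs (H x y) <= M.
Proof.
  intros Hab Hcd HC.
  destruct (uniform_continuity_2d H a b c d (fun x y _ _ => HC x y) (mkposreal 1 Rlt_0_1)) as [del Hdel].
  simpl in Hdel.
  assert (Hdp := cond_pos del).
  destruct (nfloor_ex ((b - a + (d - c)) / del)) as [n [_ Hn]].
  { apply Rdiv_le_0_compat; lra. }
  set (N := S n).
  assert (HN : INR N = INR n + 1) by (unfold N; rewrite S_INR; ring).
  assert (HN0 : 0 < INR N) by (rewrite HN; pose proof (pos_INR n); lra).
  assert (Hs1 : (b - a) / INR N < del).
  { apply (Rmult_lt_reg_r (INR N)); auto. unfold Rdiv. rewrite Rmult_assoc, Rinv_l by lra.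
    rewrite Rmult_1_r. rewrite HN. apply (Rmult_lt_compat_l del) in Hn; auto.
    unfold Rdiv in Hn. replace (del * ((b - a + (d - c)) * / del)) with (b - a + (d - c)) in Hn by (field; lra).
    nra. }
  assert (Hs2 : (d - c) / INR N < del).
  { apply (Rmult_lt_reg_r (INR N)); auto. unfold Rdiv. rewrite Rmult_assoc, Rinv_l by lra.
    rewrite Rmult_1_r. rewrite HN. apply (Rmult_lt_compat_l del) in Hn; auto.
    unfold Rdiv in Hn. replace (del * ((b - a + (d - c)) * / del)) with (b - a + (d - c)) in Hn by (field; lra).
    nra. }
  exists (Rabs (H a c) + INR N).
  intros x y Hx Hy.
  set (t := fun k : nat => INR k / INR N).
  assert (Ht : forall k, (k <= N)%nat -> 0 <= t k <= 1).
  { intros k Hk. unfold t. split. apply Rdiv_le_0_compat; auto. apply pos_INR.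
    apply le_INR in Hk. apply (Rmult_le_reg_r (INR N)); auto. unfold Rdiv.
    rewrite Rmult_assoc, Rinv_l by lra. lra. }
  assert (Hts : forall k, t (S k) - t k = / INR N).
  { intros k. unfold t. rewrite S_INR. field. lra. }
  assert (Claim : forall k, (k <= N)%nat ->
    Rabs (H (a + t k * (x - a)) (c + t k * (y - c)) - H a c) <= INR k).
  { induction k as [|k IH]; intros Hk.
    - unfold t. simpl. unfold Rdiv. rewrite Rmult_0_l, !Rmult_0_l, !Rplus_0_r.
      rewrite Rminus_diag, Rabs_R0. lra.
    - specialize (IH ltac:(lia)). rewrite S_INR.
      pose proof (Ht k ltac:(lia)) as T1. pose proof (Ht (S k) Hk) as T2.
      pose proof (Hts k) as T3.
      assert (Hstep : Rabs (H (a + t (S k) * (x - a)) (c + t (S k) * (y - c))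
                           - H (a + t k * (x - a)) (c + t k * (y - c))) < 1).
      { apply Hdel.
        - nra. - nra. - nra. - nra.
        - replace (a + t (S k) * (x - a) - (a + t k * (x - a))) with ((t (S k) - t k) * (x - a)) by ring.
          rewrite T3, Rabs_right. 2:{ apply Rle_ge. apply Rmult_le_pos. left; apply Rinv_0_lt_compat; lra. lra. }
          eapply Rle_lt_trans; [|exact Hs1]. unfold Rdiv. rewrite Rmult_comm.
          apply Rmult_le_compat_r. left; apply Rinv_0_lt_compat; lra. lra.
        - replace (c + t (S k) * (y - c) - (c + t k * (y - c))) with ((t (S k) - t k) * (y - c)) by ring.
          rewrite T3, Rabs_right. 2:{ apply Rle_ge. apply Rmult_le_pos. left; apply Rinv_0_lt_compat; lra. lra. }
          eapply Rle_lt_trans; [|exact Hs2]. unfold Rdiv. rewrite Rmult_comm.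
          apply Rmult_le_compat_r. left; apply Rinv_0_lt_compat; lra. lra. }
      eapply Rle_trans. 2:{ apply Rplus_le_compat. exact IH. left; exact Hstep. }
      eapply Rle_trans. 2: apply Rabs_triang. right. f_equal. ring. }
  specialize (Claim N (Nat.le_refl N)).
  assert (E : t N = 1) by (unfold t; field; lra).
  rewrite E in Claim. replace (a + 1 * (x - a)) with x in Claim by ring.
  replace (c + 1 * (y - c)) with y in Claim by ring.
  pose proof (Rabs_triang_inv (H x y) (H a c)). lra.
Qed.

Lemma sup_norm_ge a b c d h : a <= b -> c <= d -> cont_on_rect a b c d h ->
  forall x y, a <= x <= b -> c <= y <= d -> Rabs (h x y) <= sup_norm a b c d h.
Proof.
  intros Hab Hcd Ch x y Hx Hy.
  destruct (bounded2d a b c d _ Hab Hcd (clamp_cont a b c d h Hab Hcd Ch)) as [M HM].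
  unfold sup_norm.
  destruct (Lub_Rbar_correct (fun z => exists x y, a <= x <= b /\ c <= y <= d /\ z = Rabs (h x y))) as [Hub Hlub].
  assert (H1 := Hub (Rabs (h x y)) ltac:(exists x, y; auto)).
  assert (H2 : Rbar_le (Lub_Rbar (fun z => exists x y, a <= x <= b /\ c <= y <= d /\ z = Rabs (h x y))) M).
  { apply Hlub. intros z [x' [y' [Hx' [Hy' ->]]]]. simpl.
    specialize (HM x' y' Hx' Hy'). rewrite !cl_id in HM by auto. exact HM. }
  destruct (Lub_Rbar _); simpl in *; tauto.
Qed.


Lemma cont_of_eps (f : R -> R) x : (forall eps, 0 < eps -> exists del, 0 < del /\
   forall z, Rabs (z - x) < del -> Rabs (f z - f x) < eps) -> continuous f x.
Proof.
  intros H. apply continuity_pt_filterlim.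
  intros eps He. destruct (H eps He) as [del [Hd H1]].
  exists del. split; auto. intros z [_ Hz]. simpl in *. unfold R_dist in *. auto.
Qed.

Lemma cont_slice (H : R -> R -> R) : (forall x y, continuity_2d_pt H x y) ->
  forall x y, continuous (H x) y.
Proof.
  intros HC x y. apply cont_of_eps. intros eps He.
  destruct (HC x y (mkposreal eps He)) as [del Hd].
  exists del. split. apply cond_pos. intros z Hz. apply Hd; auto.
  rewrite Rminus_diag, Rabs_R0. apply cond_pos.
Qed.

Lemma exRInt_slice (H : R -> R -> R) c d : (forall x y, continuity_2d_pt H x y) ->
  forall x, ex_RInt (H x) c d.
Proof. intros HC x. apply (ex_RInt_continuous (V:=R_CompleteNormedModule)). intros; apply cont_slice; auto. Qed.

Lemma param_cont a b c d (H : R -> R -> R) : a <= b -> c < d ->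
  (forall x y, continuity_2d_pt H x y) ->
  (forall u v, H u v = H (cl a b u) v) ->
  forall x, continuous (fun x => RInt (H x) c d) x.
Proof.
  intros Hab Hcd HC Hcl x. apply cont_of_eps. intros eps He.
  assert (He' : 0 < eps / (2 * (d - c))) by (apply Rdiv_lt_0_compat; lra).
  destruct (uniform_continuity_2d H a b c d (fun x y _ _ => HC x y) (mkposreal _ He')) as [del Hdel].
  simpl in Hdel.
  exists del. split. apply cond_pos. intros z Hz.
  assert (E : RInt (H z) c d - RInt (H x) c d = RInt (fun t => H z t - H x t) c d).
  { pose proof (RInt_minus (H z) (H x) c d (exRInt_slice H c d HC z) (exRInt_slice H c d HC x)) as E.
    unfold minus, plus, opp in E; simpl in E. exact (eq_sym E). }
  rewrite E.
  eapply Rle_lt_trans.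
  apply (abs_RInt_le_const _ c d (eps / (2 * (d - c)))). lra.
  { apply (ex_RInt_minus (V:=R_NormedModule)); apply exRInt_slice; auto. }
  - intros t Ht. rewrite (Hcl z), (Hcl x). left. apply Hdel; try apply cl_in; auto.
    eapply Rle_lt_trans. apply cl_lip; auto. auto.
    rewrite Rminus_diag, Rabs_R0. apply cond_pos.
  - replace ((d - c) * (eps / (2 * (d - c)))) with (eps / 2) by (field; lra). lra.
Qed.


Lemma cl_idem a b u : a <= b -> cl a b (cl a b u) = cl a b u.
Proof. intros. apply cl_id, cl_in; auto. Qed.

Lemma iint_clamp a b c d F : a <= b -> c <= d ->
  iint a b c d F = RInt (fun x => RInt (fun y => F (cl a b x) (cl c d y)) c d) a b.
Proof.
  intros Hab Hcd. unfold iint. apply RInt_ext. intros x Hx.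
  rewrite Rmin_left, Rmax_right in Hx by lra.
  apply RInt_ext. intros y Hy. rewrite Rmin_left, Rmax_right in Hy by lra.
  rewrite !cl_id by lra. reflexivity.
Qed.

Lemma exR (f : R -> R) a b : (forall x, continuous f x) -> ex_RInt f a b.
Proof. intros H. apply (ex_RInt_continuous (V:=R_CompleteNormedModule)). intros; auto. Qed.

Lemma iint_le a b c d F G k : a < b -> c < d ->
  (forall x y, continuity_2d_pt (fun u v => F (cl a b u) (cl c d v)) x y) ->
  (forall x y, continuity_2d_pt (fun u v => G (cl a b u) (cl c d v)) x y) ->
  (forall x y, a <= x <= b -> c <= y <= d -> Rabs (F x y) <= k * G x y) ->
  Rabs (iint a b c d F) <= k * iint a b c d G.
Proof.
  intros Hab Hcd HF HG Hp.
  rewrite !iint_clamp by lra.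
  set (Fc := fun u v => F (cl a b u) (cl c d v)) in *.
  set (Gc := fun u v => G (cl a b u) (cl c d v)) in *.
  assert (CF : forall x, continuous (fun x => RInt (Fc x) c d) x).
  { apply param_cont with a b; try lra; auto. intros. unfold Fc. rewrite cl_idem; auto; lra. }
  assert (CG : forall x, continuous (fun x => RInt (Gc x) c d) x).
  { apply param_cont with a b; try lra; auto. intros. unfold Gc. rewrite cl_idem; auto; lra. }
  change (Rabs (RInt (fun x => RInt (Fc x) c d) a b) <= k * RInt (fun x => RInt (Gc x) c d) a b).
  eapply Rle_trans. apply abs_RInt_le. lra. apply exR; auto.
  assert (EG : ex_RInt (fun x => RInt (Gc x) c d) a b) by (apply exR; auto).
  assert (E : k * RInt (fun x => RInt (Gc x) c d) a b = RInt (fun x => k * RInt (Gc x) c d) a b).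
  { symmetry. exact (RInt_scal (V:=R_CompleteNormedModule) _ a b k EG). }
  rewrite E.
  apply RInt_le. lra.
  - apply exR. intros; apply continuous_Rabs_comp; auto.
  - exact (ex_RInt_scal (V:=R_CompleteNormedModule) _ a b k EG).
  - intros x Hx.
    eapply Rle_trans. apply abs_RInt_le. lra. apply exRInt_slice; auto.
    assert (EG2 : ex_RInt (Gc x) c d) by (apply exRInt_slice; auto).
    assert (E2 : k * RInt (Gc x) c d = RInt (fun y => k * Gc x y) c d).
    { symmetry. exact (RInt_scal (V:=R_CompleteNormedModule) _ c d k EG2). }
    rewrite E2. apply RInt_le. lra.
    + apply exR. intros; apply continuous_Rabs_comp; apply cont_slice; auto.
    + exact (ex_RInt_scal (V:=R_CompleteNormedModule) _ c d k EG2).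
    + intros y Hy. unfold Fc, Gc. apply Hp; apply cl_in; lra.
Qed.


Lemma fix2 (h : R -> R -> R) c0 : (forall x y, continuity_2d_pt h x y) ->
  forall x y, continuity_2d_pt (fun u v => h u c0) x y.
Proof.
  intros HC x y eps. destruct (HC x c0 eps) as [del Hd].
  exists del. intros u v Hu Hv. apply Hd; auto. rewrite Rminus_diag, Rabs_R0. apply cond_pos.
Qed.

Lemma fix1 (h : R -> R -> R) a0 : (forall x y, continuity_2d_pt h x y) ->
  forall x y, continuity_2d_pt (fun u v => h a0 v) x y.
Proof.
  intros HC x y eps. destruct (HC a0 y eps) as [del Hd].
  exists del. intros u v Hu Hv. apply Hd; auto. rewrite Rminus_diag, Rabs_R0. apply cond_pos.
Qed.

Ltac c2d Cf Cg :=
  repeat first [ apply continuity_2d_pt_minus | apply continuity_2d_pt_plus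
        | apply continuity_2d_pt_mult | apply continuity_2d_pt_const
        | apply Cf | apply Cg | apply fix1; assumption | apply fix2; assumption
        | apply continuity_1d_2d_pt_comp; [apply Rcontinuity_abs|] ].

Lemma contF (fc gc : R -> R -> R) a b c d K1 K2 :
  (forall x y, continuity_2d_pt fc x y) -> (forall x y, continuity_2d_pt gc x y) ->
  forall x y, continuity_2d_pt (fun u v => fc u v * gc u v - /2 * ((/2*(fc u c + fc u d + fc a v + fc b v) - K1) * gc u v + (/2*(gc u c + gc u d + gc a v + gc b v) - K2) * fc u v)) x y.
Proof. intros Cf Cg x y. c2d Cf Cg. Qed.

Lemma contG (fc gc : R -> R -> R) S1 S2 :
  (forall x y, continuity_2d_pt fc x y) -> (forall x y, continuity_2d_pt gc x y) ->
  forall x y, continuity_2d_pt (fun u v => Rabs (gc u v) * S1 + Rabs (fc u v) * S2) x y.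
Proof. intros Cf Cg x y. c2d Cf Cg. Qed.


Theorem corollary2p1 (a b c d : R) (f g f1 f2 f12 g1 g2 g12 : R -> R -> R) :
  a < b -> c < d ->
  cont_on_rect a b c d f -> cont_on_rect a b c d g ->
  is_D1 a b c d f f1 -> is_D2 a b c d f f2 ->
  is_D1 a b c d g g1 -> is_D2 a b c d g g2 ->
  is_D2 a b c d f1 f12 -> is_D2 a b c d g1 g12 ->
  cont_on_rect a b c d f1 -> cont_on_rect a b c d f2 ->
  cont_on_rect a b c d g1 -> cont_on_rect a b c d g2 ->
  cont_on_rect a b c d f12 -> cont_on_rect a b c d g12 ->
  Rabs (iint a b c d (fun x y =>
          f x y * g x y
          - / 2 * (Pop a b c d f x y * g x y + Pop a b c d g x y * f x y)))
  <= / 8 * (b - a) * (d - c) *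
     iint a b c d (fun x y =>
          Rabs (g x y) * sup_norm a b c d f12
          + Rabs (f x y) * sup_norm a b c d g12).
Proof.
  intros Hab Hcd Cf Cg Df1 Df2 Dg1 Dg2 Df12 Dg12 Cf1 Cf2 Cg1 Cg2 Cf12 Cg12.
  assert (Hab' : a <= b) by lra. assert (Hcd' : c <= d) by lra.
  set (Sf := sup_norm a b c d f12). set (Sg := sup_norm a b c d g12).
  assert (Bf := sup_norm_ge a b c d f12 Hab' Hcd' Cf12).
  assert (Bg := sup_norm_ge a b c d g12 Hab' Hcd' Cg12).
  assert (Pf := pbound a b c d f f1 f12 Sf Hab' Hcd' Cf Cf1 Df1 Df12 Bf).
  assert (Pg := pbound a b c d g g1 g12 Sg Hab' Hcd' Cg Cg1 Dg1 Dg12 Bg).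
  assert (CCf := clamp_cont a b c d f Hab' Hcd' Cf).
  assert (CCg := clamp_cont a b c d g Hab' Hcd' Cg).
  assert (Ea : cl a b a = a) by (apply cl_id; lra).
  assert (Eb : cl a b b = b) by (apply cl_id; lra).
  assert (Ec : cl c d c = c) by (apply cl_id; lra).
  assert (Ed : cl c d d = d) by (apply cl_id; lra).
  apply iint_le; auto.
  - intros x y.
    eapply continuity_2d_pt_ext.
    2: apply (contF _ _ a b c d (/ 4 * (f a c + f a d + f b c + f b d)) (/ 4 * (g a c + g a d + g b c + g b d)) CCf CCg).
    intros u v. simpl. unfold Pop. rewrite Ea, Eb, Ec, Ed. reflexivity.
  - intros x y. apply (contG _ _ Sf Sg CCf CCg).
  - intros x y Hx Hy.
    cbv beta. specialize (Pf x y Hx Hy). specialize (Pg x y Hx Hy).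
    replace (f x y * g x y - / 2 * (Pop a b c d f x y * g x y + Pop a b c d g x y * f x y))
      with (/ 2 * ((f x y - Pop a b c d f x y) * g x y + (g x y - Pop a b c d g x y) * f x y)) by field.
    rewrite Rabs_mult, Rabs_right by lra.
    eapply Rle_trans. apply Rmult_le_compat_l. lra. apply Rabs_triang.
    rewrite !Rabs_mult.
    assert (A1 := Rabs_pos (g x y)). assert (A2 := Rabs_pos (f x y)).
    assert (M1 := Rmult_le_compat_r _ _ _ A1 Pf).
    assert (M2 := Rmult_le_compat_r _ _ _ A2 Pg).
    assert (E : / 8 * (b - a) * (d - c) * (Rabs (g x y) * Sf + Rabs (f x y) * Sg)
      = / 2 * (/ 4 * ((b - a) * (d - c) * Sf) * Rabs (g x y) + / 4 * ((b - a) * (d - c) * Sg) * Rabs (f x y))) by field.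
    rewrite E. lra.
Qed.
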